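(* Let $\pi$ be a set of primes, $G$ a finite group, $A$ a normal subgroup of $G$ and $H$ a $\pi$-Hall subgroup of $G$, and assume $HAC_G(A)\trianglelefteq G$ (which holds in particular if $HA\trianglelefteq G$). Then an $A$-class of $\pi$-Hall subgroups of $A$ (i.e. a set $\{U^x\mid x\in A\}$ with $U$ a $\pi$-Hall subgroup of $A$) is an $A$-class of $G$-induced $\pi$-Hall subgroups if and only if it is invariant under conjugation by $H$.
   Context: All groups are finite. A subgroup $H$ of $G$ is a $\pi$-Hall subgroup if all prime divisors of $|H|$ lie in $\pi$ and no prime divisor of $|G:H|$ lies in $\pi$. For a subnormal subgroup $A$ of a group $G$ possessing $\pi$-Hall subgroups, a $G$-induced $\pi$-Hall subgroup of $A$ is a subgroup of the form $K\cap A$ where $K$ is a $\pi$-Hall subgroup of $G$; an $A$-class of $G$-induced $\pi$-Hall subgroups is a set $\{(K\cap A)^x\mid x\in A\}$ with $K$ a $\pi$-Hall subgroup of $G$. *)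

(* Defs.v *)
From mathcomp Require Import all_boot all_fingroup all_solvable.
Set Implicit Arguments. Unset Strict Implicit. Unset Printing Implicit Defensive.
Local Open Scope group_scope.

Definition A_class (gT : finGroupType) (A U : {set gT}) : {set {set gT}} :=
  [set U :^ x | x in A].

Definition induced_class (gT : finGroupType) (A K : {set gT}) : {set {set gT}} :=
  [set (K :&: A) :^ x | x in A].

Definition conj_invariant (gT : finGroupType) (H : {set gT}) (C : {set {set gT}}) : Prop :=
  forall h, h \in H -> [set V :^ h | V in C] = C.

(* Main.v *)
Require Import Defs.
From mathcomp Require Import all_boot all_fingroup all_solvable.
Set Implicit Arguments. Unset Strict Implicit. Unset Printing Implicit Defensive.
Local Open Scope group_scope.

Lemma fwd (gT : finGroupType) (pi : nat_pred) (G A H K : {group gT})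
  (nAG : A <| G) (hallH : pi.-Hall(G) H)
  (nHAC : (H * A * 'C_G(A)) <| G) (hallK : pi.-Hall(G) K) :
  conj_invariant H (induced_class A K).
Proof.
have [sAG nAG'] := andP nAG.
have sHG := pHall_sub hallH; have sKG := pHall_sub hallK.
set C := 'C_G(A).
have nCG : G \subset 'N(C) by rewrite normsI ?normG ?norms_cent.
have nAC : C \subset 'N(A) by rewrite subIset // cent_sub orbT.
pose M := (A <*> C)%G.
have defM : M :=: A * C := norm_joinEr nAC.
have nMG : G \subset 'N(M) by rewrite norms_gen ?normsU.
have nMH := subset_trans sHG nMG; have nMK := subset_trans sKG nMG.
have HKM : H \subset K * M.
  have nsHM : H / M <| G / M.
    by rewrite -quotientMidr; apply: quotient_normal; rewrite defM mulgA.
  have hHM := quotient_pHall nMH hallH.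
  have hKM := quotient_pHall nMK hallK.
  have sKH : K / M \subset H / M.
    by rewrite (sub_normal_Hall hHM nsHM) ?quotientS ?(pHall_pgroup hKM) //.
  have eqHK : H / M = K / M.
    apply/eqP; rewrite eq_sym eqEcard sKH (card_Hall hHM) (card_Hall hKM) leqnn //.
  rewrite -norm_joinEl //.
  have := quotientSGK nMH (joing_subr K M); rewrite quotientYidr // -eqHK subxx.
  by move/esym.
have key : forall g, g \in K * M -> forall V, V \in induced_class A K ->
    V :^ g \in induced_class A K.
  move=> g /mulsgP[k m Kk Mm ->] V /imsetP[x Ax ->].
  rewrite defM in Mm; case/mulsgP: Mm => a c Aa Cc ->.
  have Nk : k \in 'N(A) := subsetP (subset_trans sKG nAG') k Kk.
  apply/imsetP; exists (x ^ k * a); first by rewrite groupM ?memJ_norm.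
  rewrite -conjsgM.
  have -> : x * (k * (a * c)) = k * (x ^ k * a * c) by rewrite /conjg -!mulgA mulKVg.
  rewrite conjsgM conjIg conjGid // (normP Nk) conjsgM.
  have Ay : x ^ k * a \in A by rewrite groupM ?memJ_norm.
  have sWA : (K :&: A) :^ (x ^ k * a) \subset A.
    by rewrite -{2}(normP (subsetP nAG' _ (subsetP sAG _ Ay))) conjSg subsetIr.
  apply/normP; apply: (subsetP (cent_sub _)); apply: (subsetP (centS sWA)).
  by case/setIP: Cc.
move=> h Hh; apply/eqP; rewrite eqEsubset; apply/andP; split.
  apply/subsetP => _ /imsetP[V IV ->]; apply: key => //; exact: (subsetP HKM).
apply/subsetP => V IV; apply/imsetP; exists (V :^ h^-1); last by rewrite conjsgKV.
by apply: key; rewrite ?(subsetP HKM) ?groupV.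
Qed.
Lemma bwd (gT : finGroupType) (pi : nat_pred) (G A H : {group gT})
  (nAG : A <| G) (hallH : pi.-Hall(G) H)
  (U : {group gT}) (hallU : pi.-Hall(A) U) :
  conj_invariant H (A_class A U) ->
  exists2 K : {group gT}, pi.-Hall(G) K & A_class A U = induced_class A K.
Proof.
move=> inv.
have [sAG nAG'] := andP nAG.
have sHG := pHall_sub hallH.
have nAH : H \subset 'N(A) := subset_trans sHG nAG'.
pose B := (H <*> A)%G.
have defB : B :=: H * A := norm_joinEl nAH.
have sAB : A \subset B := joing_subr H A.
have sHB : H \subset B := joing_subl H A.
have sBG : B \subset G by rewrite join_subG sHG sAG.
pose N := 'N_B(U)%G. pose Q := (N :&: A)%G.
have sUA := pHall_sub hallU.
have sNB : N \subset B := subsetIl _ _.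
have nUN : N \subset 'N(U) := subsetIr _ _.
have sUN : U \subset N by rewrite subsetI (subset_trans sUA sAB) normG.
have sUQ : U \subset Q by rewrite subsetI sUN sUA.
have sQA : Q \subset A := subsetIr _ _.
have sQN : Q \subset N := subsetIl _ _.
have nsQN : Q <| N := normalGI (subset_trans sNB sBG) nAG.
have nsUN : U <| N by rewrite /normal sUN nUN.
have defNA : N * A = B.
  apply/eqP; rewrite eqEsubset mul_subG //=.
  have sHNA : H \subset N * A.
    apply/subsetP => h Hh.
    have : U :^ h \in A_class A U.
      rewrite -(inv h Hh); apply/imsetP; exists (gval U) => //.
      by apply/imsetP; exists 1; rewrite ?group1 ?conjsg1.
    case/imsetP => x Ax eqx.
    rewrite -(mulgVK x h); apply: mem_mulg => //.
    rewrite inE groupM ?groupV ?(subsetP sAB x Ax) ?(subsetP sHB h Hh) //=.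
    by apply/normP; rewrite conjsgM eqx conjsgK.
  have : H * A \subset N * A.
    by apply: subset_trans (mulSg A sHNA) _; rewrite -mulgA mulGid.
  by rewrite -defB.
have c1 : (#|N| * #|A| = #|B| * #|Q|)%N by rewrite mul_cardG defNA.
have hallHA := Hall_setI_normal nAG hallH.
have c2 : (#|H| * #|A| = #|B| * #|H :&: A|)%N by rewrite mul_cardG -defB.
have c3 : #|U| = #|H :&: A| by rewrite (card_Hall hallU) (card_Hall hallHA).
have c4 : (#|N : Q| * #|A| = #|B|)%N.
  apply/eqP; rewrite -(eqn_pmul2r (cardG_gt0 Q)) mulnAC (mulnC #|N : Q|) Lagrange //.
  by rewrite c1.
have c5 : (#|N : Q| * #|H :&: A| = #|H|)%N.
  apply/eqP; rewrite -(eqn_pmul2r (cardG_gt0 A)) mulnAC c4 c2 mulnC.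
  by [].
have piNQ : pi.-nat #|N : Q|.
  by apply: pnat_dvd (pHall_pgroup hallH); rewrite -c5 dvdn_mulr.
have nUQ : Q \subset 'N(U) := subset_trans sQN nUN.
have iNQ : #|N / U : Q / U| = #|N : Q|.
  apply/eqP; rewrite -(eqn_pmul2l (cardG_gt0 (Q / U))) Lagrange ?quotientS //.
  rewrite !card_quotient // -(Lagrange_index sQN sUQ) mulnC //.
have hallQU : Hall (N / U) (Q / U).
  rewrite /Hall quotientS //= iNQ card_quotient // coprime_sym.
  apply: pnat_coprime piNQ _.
  by case/and3P: (pHall_subl sUQ sQA hallU).
have nsQNU : Q / U <| N / U := quotient_normal _ nsQN.
have [Xb] := splitsP (SchurZassenhaus_split hallQU nsQNU).
case/complP => tiQX defQX.
pose K := (coset U @*^-1 Xb)%G.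
have sXN : Xb \subset N / U by rewrite -defQX mulG_subr.
have sKN : K \subset N by rewrite -(quotientGK nsUN); apply: morphpreS.
have KA : K :&: A = U.
  apply/eqP; rewrite eqEsubset; apply/andP; split.
    apply/subsetP => y /setIP[Ky Ay].
    have Ny := subsetP sKN y Ky.
    have Qy : y \in Q by rewrite inE Ny Ay.
    apply: coset_idr; first exact: (subsetP nUN).
    have : coset U y \in Q / U :&: Xb.
      by rewrite inE mem_quotient //=; case/morphpreP: Ky.
    by rewrite tiQX => /set1P.
  by rewrite subsetI sUA andbT -{1}(ker_coset U) ker_sub_pre.
have cX : #|Xb| = #|N : Q|.
  apply/eqP; rewrite -(eqn_pmul2l (cardG_gt0 (Q / U))) -TI_cardMg // defQX.
  by rewrite -iNQ Lagrange ?quotientS.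
have cK : #|K| = #|H|.
  rewrite card_morphpre ?ker_coset ?cX ?c3 1?mulnC ?c5 //.
  by apply: subset_trans sXN _; apply: quotientS.
exists K; last by rewrite /A_class /induced_class KA.
rewrite pHallE cK (card_Hall hallH) eqxx andbT.
exact: subset_trans sKN (subset_trans sNB sBG).
Qed.

Theorem lemma6 (gT : finGroupType) (pi : nat_pred) (G A H : {group gT})
  (nAG : A <| G) (hallH : pi.-Hall(G) H)
  (nHAC : (H * A * 'C_G(A)) <| G)
  (U : {group gT}) (hallU : pi.-Hall(A) U) :
  (exists2 K : {group gT}, pi.-Hall(G) K & A_class A U = induced_class A K)
  <-> conj_invariant H (A_class A U).
Proof.
split.
  by case=> K hallK ->; exact: (fwd nAG hallH nHAC hallK).
exact: bwd.
Qed.
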